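(* Let $\mathcal{H}$ be a complex Hilbert space and $x,y,e\in\mathcal{H}$ with $\|e\|=1$. Then for every $0\le\alpha\le1$, $$|\langle x,e\rangle\langle e,y\rangle|^2\le \frac{1+\alpha}{4}\|x\|^2\|y\|^2+\frac{1-\alpha}{4}|\langle x,y\rangle|^2+\frac12\|x\|\,\|y\|\,|\langle x,y\rangle|.$$
   Context: $\langle\cdot,\cdot\rangle$ is the inner product of $\mathcal{H}$ and $\|\cdot\|$ the induced norm. *)

(* Defs.v *)
From HB Require Import structures.
From mathcomp Require Import all_boot all_order all_algebra.
From mathcomp Require Import complex.
From mathcomp Require Import reals.
Set Implicit Arguments. Unset Strict Implicit. Unset Printing Implicit Defensive.
Import Order.TTheory GRing.Theory Num.Theory.
Local Open Scope ring_scope.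

Record is_inner_product (R : rcfType) (V : lmodType (complex R))
    (ip : V -> V -> complex R) : Prop := {
  ip_linearl : forall (a : complex R) (x y z : V),
      ip (a *: x + y) z = a * ip x z + ip y z;
  ip_conjsym : forall x y : V, ip y x = (ip x y)^*;
  ip_ge0 : forall x : V, 0 <= ip x x;
  ip_eq0 : forall x : V, ip x x = 0 -> x = 0
}.

(* induced norm ||x|| = sqrt <x,x> (a nonnegative real, viewed in complex R) *)
Definition ipnorm (R : rcfType) (V : lmodType (complex R))
    (ip : V -> V -> complex R) (x : V) : complex R := sqrtC (ip x x).

Definition ip_complete (R : rcfType) (V : lmodType (complex R))
    (ip : V -> V -> complex R) : Prop :=
  forall u : nat -> V,
    (forall eps : complex R, 0 < eps -> exists N : nat, forall m n : nat,
        (N <= m)%N -> (N <= n)%N -> ipnorm ip (u m - u n) < eps) ->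
    exists l : V, forall eps : complex R, 0 < eps -> exists N : nat,
        forall n : nat, (N <= n)%N -> ipnorm ip (u n - l) < eps.

Definition is_hilbert (R : rcfType) (V : lmodType (complex R))
    (ip : V -> V -> complex R) : Prop :=
  is_inner_product ip /\ ip_complete ip.

(* Main.v *)
Require Import Defs.
From HB Require Import structures.
From mathcomp Require Import all_boot all_order all_algebra.
From mathcomp Require Import complex.
From mathcomp Require Import reals.
From mathcomp Require Import ring.
Import Order.TTheory GRing.Theory Num.Theory.
Local Open Scope ring_scope.

Section IP.
Variables (R : realType) (V : lmodType (complex R)) (ip : V -> V -> complex R).
Hypothesis hI : is_inner_product ip.

Lemma ip0l z : ip 0 z = 0.
Proof.
have := ip_linearl hI 1 0 0 z.
rewrite scale1r addr0 mul1r => h.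
by apply: (addrI (ip 0 z)); rewrite addr0 -h.
Qed.

Lemma ip0r z : ip z 0 = 0.
Proof. by rewrite (ip_conjsym hI) ip0l rmorph0. Qed.

Lemma ipl a b x y z : ip (a *: x + b *: y) z = a * ip x z + b * ip y z.
Proof.
rewrite (ip_linearl hI); congr (_ + _).
by have := ip_linearl hI b y 0 z; rewrite addr0 ip0l addr0.
Qed.

Lemma ipr a b x y z : ip z (a *: x + b *: y) = a^* * ip z x + b^* * ip z y.
Proof.
by rewrite (ip_conjsym hI) ipl rmorphD !rmorphM /= -!(ip_conjsym hI).
Qed.

Lemma ip_real x : (ip x x)^* = ip x x.
Proof. by rewrite geC0_conj // (ip_ge0 hI). Qed.

Lemma CS u v : `|ip u v| ^+ 2 <= ip u u * ip v v.
Proof.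
set c := ip v v; set d := ip u v.
have hc : 0 <= c by apply: (ip_ge0 hI).
have := ip_ge0 hI (c *: u + (- d) *: v).
rewrite ipl !ipr.
have -> : ip v u = d^* by rewrite (ip_conjsym hI).
rewrite ip_real -/c -/d rmorphN /=.
have -> : c * (c * ip u u + - d^* * d) + - d * (c * d^* + - d^* * c)
   = c * (c * ip u u - d * d^*) by ring.
rewrite -normCK.
have [c0|cpos] := eqVneq c 0.
  move=> _; have v0 : v = 0 by apply: (ip_eq0 hI).
  by rewrite /d v0 ip0r normr0 expr0n /= c0 mulr0.
have cp : 0 < c by rewrite lt_def cpos hc.
rewrite pmulr_rge0 // subr_ge0 => H.
by rewrite mulrC.
Qed.

End IP.

Lemma sq_le (C : numClosedFieldType) (a b : C) :
  0 <= a -> 0 <= b -> a ^+ 2 <= b ^+ 2 -> a <= b.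
Proof.
move=> ha hb; by rewrite ler_pXn2r // nnegrE.
Qed.

Lemma sq_le' (C : numClosedFieldType) (a b : C) :
  0 <= a -> 0 <= b -> a <= b -> a ^+ 2 <= b ^+ 2.
Proof.
move=> ha hb; by rewrite ler_pXn2r // nnegrE.
Qed.

Theorem mainTheorem9 (R : realType) (V : lmodType (complex R))
    (ip : V -> V -> complex R) (hH : is_hilbert ip)
    (x y e : V) (he : ipnorm ip e = 1)
    (alpha : R) (ha0 : 0 <= alpha) (ha1 : alpha <= 1) :
  `|ip x e * ip e y| ^+ 2 <=
    (1 + (alpha%:C)%C) / 4 * (ipnorm ip x ^+ 2 * ipnorm ip y ^+ 2)
    + (1 - (alpha%:C)%C) / 4 * `|ip x y| ^+ 2
    + 1 / 2 * (ipnorm ip x * ipnorm ip y * `|ip x y|).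
Proof.
have hI := hH.1.
have hee : ip e e = 1 by rewrite -(sqrtCK (ip e e)); move: he; rewrite /ipnorm => ->; rewrite expr1n.
set a := ip x e; set b := ip e y; set p := ip x y.
set nx := ipnorm ip x; set ny := ipnorm ip y.
have nx0 : 0 <= nx by rewrite /nx /ipnorm sqrtC_ge0 (ip_ge0 hI).
have ny0 : 0 <= ny by rewrite /ny /ipnorm sqrtC_ge0 (ip_ge0 hI).
have XY : ip x x * ip y y = (nx * ny) ^+ 2 by rewrite exprMn /nx /ny /ipnorm !sqrtCK.
set z := (2 * a) *: e + (-1) *: x.
have hzz : ip z z = ip x x.
  rewrite /z (@ipl _ _ _ hI) !(@ipr _ _ _ hI) hee.
  have -> : ip e x = a^* by rewrite (ip_conjsym hI).
  rewrite rmorphN rmorph1 rmorphM /= (rmorph_nat _ 2).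
  have -> : 2 * a * (2 * a^* * 1 + -1 * a^*) + -1 * (2 * a^* * a + -1 * ip x x)
     = ip x x by ring.
  by [].
have hzy : ip z y = 2 * a * b - p.
  by rewrite /z (@ipl _ _ _ hI) mulN1r -mulrA.
have H1 : `|2 * a * b - p| <= nx * ny.
  apply: sq_le => //; first by rewrite mulr_ge0.
  by rewrite -hzy -XY -hzz; apply: (@CS _ _ _ hI).
have H2 : `|p| <= nx * ny.
  apply: sq_le => //; first by rewrite mulr_ge0.
  by rewrite -XY; apply: (@CS _ _ _ hI).
set A := nx * ny; set B := `|p|; set s := `|a * b|.
have s0 : 0 <= s by apply: normr_ge0.
have Hs : 2 * s <= A + B.
  have -> : 2 * s = `|(2 * a * b - p) + p|.
    by rewrite subrK -mulrA normrM ger0_norm.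
  by apply: (le_trans (ler_normD _ _)); apply: lerD.
have Hs2 : 4 * s ^+ 2 <= (A + B) ^+ 2.
  have -> : 4 * s ^+ 2 = (2 * s) ^+ 2 by ring.
  apply: sq_le' => //; [apply: mulr_ge0 => //; exact: ler0n | apply: addr_ge0 => //; [exact: mulr_ge0 | exact: normr_ge0]].
have HAB : B ^+ 2 <= A ^+ 2 by apply: sq_le' => //; [exact: normr_ge0 | exact: mulr_ge0].
have al0 : 0 <= (alpha%:C)%C by rewrite lecE /= eqxx ha0.
rewrite -exprMn -/A -/B -subr_ge0.
have -> : (1 + (alpha%:C)%C) / 4 * A ^+ 2 + (1 - (alpha%:C)%C) / 4 * B ^+ 2 +
  1 / 2 * (A * B) - s ^+ 2 =
  ((A + B) ^+ 2 - 4 * s ^+ 2) / 4 + (alpha%:C)%C * (A ^+ 2 - B ^+ 2) / 4.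
  rewrite /A /B /s; field.
  by [].
have h4 : 0 <= (4 : complex R) by rewrite ler0n.
apply: addr_ge0; apply: divr_ge0.
- by rewrite subr_ge0.
- exact: h4.
- apply: mulr_ge0; first exact: al0.
  by rewrite subr_ge0.
- exact: h4.
Qed.
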